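(* If a liner $X$ is $\kappa$-parallel for some finite nonzero cardinal $\kappa$, then for every triangle $abc$ in $X$ there exists a point $d\in X$ such that $abcd$ is a parallelogram.
   Context: A liner is a set $X$ of points with a family of subsets called lines such that any two distinct points lie in a unique line and every line contains at least two points. For distinct $x,y$, $\overline{xy}$ is the line through them and $\overline{xx}:=\{x\}$. A set is flat if it contains $\overline{xy}$ for all its distinct points; $\overline A$ is the smallest flat containing $A$; the rank $\|A\|$ is the smallest cardinality of $B\subseteq X$ with $A\subseteq\overline B$; a plane is a flat of rank 3. $X$ is $\kappa$-parallel if for every plane $P$, line $L\subseteq P$ and point $x\in P\setminus L$ there exist exactly $\kappa$ lines $\Lambda$ with $x\in\Lambda\subseteq P\setminus L$. A triangle is a triple $abc\in X^3$ with $\|\{a,b,c\}\|=3$. A flat $A$ is subparallel to a flat $B$ if $A\subseteq\overline{\{a\}\cup B}$ for every $a\in A$; $A\parallel B$ means each is subparallel to the other. A parallelogram is a quadruple $abcd\in X^4$ with $\overline{ab}\parallel\overline{cd}\ne\overline{ab}$ and $\overline{bc}\parallel\overline{ad}\ne\overline{bc}$. *)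

(* Defs.v *)
From Stdlib Require Import List Arith.
Import ListNotations.

Section Liners.
Context {T : Type}.

Definition set_eq (A B : T -> Prop) : Prop := forall z, A z <-> B z.
Definition subset (A B : T -> Prop) : Prop := forall z, A z -> B z.

Definition is_liner (Lines : (T -> Prop) -> Prop) : Prop :=
  (forall x y, x <> y -> exists L, Lines L /\ L x /\ L y) /\
  (forall x y L L', x <> y -> Lines L -> Lines L' ->
      L x -> L y -> L' x -> L' y -> set_eq L L') /\
  (forall L, Lines L -> exists x y, x <> y /\ L x /\ L y).

(* overline{xy}: the line through x and y if x <> y, and {x} if x = y. *)
Definition line_through (Lines : (T -> Prop) -> Prop) (x y : T) : T -> Prop :=
  fun z => z = x \/ (x <> y /\ exists L, Lines L /\ L x /\ L y /\ L z).

Definition flat (Lines : (T -> Prop) -> Prop) (A : T -> Prop) : Prop :=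
  forall x y, A x -> A y -> subset (line_through Lines x y) A.

Definition flat_hull (Lines : (T -> Prop) -> Prop) (A : T -> Prop) : T -> Prop :=
  fun z => forall F, flat Lines F -> subset A F -> F z.

Definition rank_le (Lines : (T -> Prop) -> Prop) (A : T -> Prop) (n : nat) : Prop :=
  exists B : list T, length B <= n /\ subset A (flat_hull Lines (fun z => In z B)).

Definition has_rank (Lines : (T -> Prop) -> Prop) (A : T -> Prop) (n : nat) : Prop :=
  rank_le Lines A n /\ forall m, m < n -> ~ rank_le Lines A m.

Definition plane (Lines : (T -> Prop) -> Prop) (P : T -> Prop) : Prop :=
  flat Lines P /\ has_rank Lines P 3.

(* "there exist exactly k sets satisfying Q", counted up to extensional equality *)
Definition exactly_n (Q : (T -> Prop) -> Prop) (k : nat) : Prop :=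
  exists l : list (T -> Prop),
    length l = k /\
    (forall i j, i < k -> j < k -> i <> j ->
        ~ set_eq (nth i l (fun _ => False)) (nth j l (fun _ => False))) /\
    (forall A, In A l -> Q A) /\
    (forall A, Q A -> exists B, In B l /\ set_eq A B).

Definition kappa_parallel (Lines : (T -> Prop) -> Prop) (k : nat) : Prop :=
  forall P L x, plane Lines P -> Lines L -> subset L P -> P x -> ~ L x ->
    exactly_n (fun M => Lines M /\ M x /\
                        subset M (fun z => P z /\ ~ L z)) k.

Definition triangle (Lines : (T -> Prop) -> Prop) (a b c : T) : Prop :=
  has_rank Lines (fun z => z = a \/ z = b \/ z = c) 3.

Definition subparallel (Lines : (T -> Prop) -> Prop) (A B : T -> Prop) : Prop :=
  forall a, A a -> subset A (flat_hull Lines (fun z => z = a \/ B z)).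

Definition parallel (Lines : (T -> Prop) -> Prop) (A B : T -> Prop) : Prop :=
  subparallel Lines A B /\ subparallel Lines B A.

Definition parallelogram (Lines : (T -> Prop) -> Prop) (a b c d : T) : Prop :=
  parallel Lines (line_through Lines a b) (line_through Lines c d) /\
  ~ set_eq (line_through Lines c d) (line_through Lines a b) /\
  parallel Lines (line_through Lines b c) (line_through Lines a d) /\
  ~ set_eq (line_through Lines a d) (line_through Lines b c).

End Liners.

(* Main.v *)
Require Import Defs.
From Stdlib Require Import List Arith Lia Classical.
Import ListNotations.

Section S.
Context {T : Type} (Lines : (T -> Prop) -> Prop) (HX : is_liner Lines).

Lemma line_eq u v L0 : u <> v -> Lines L0 -> L0 u -> L0 v ->
  forall z, line_through Lines u v z <-> L0 z.
Proof.
  destruct HX as [H1 [H2 H3]]. intros Huv HL Hu Hv z; split.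
  - intros [->|[_ [L [HL' [Lu [Lv Lz]]]]]]; auto.
    apply (H2 u v L L0); auto.
  - intros; right; split; auto; exists L0; auto.
Qed.

Lemma hull_flat A : flat Lines (flat_hull Lines A).
Proof. intros x y Hx Hy z Hz F HF HA. apply (HF x y); [apply Hx|apply Hy|]; auto. Qed.

Lemma hull_incl A : subset A (flat_hull Lines A).
Proof. intros z Hz F HF HA; auto. Qed.

Lemma hull_min A F : flat Lines F -> subset A F -> subset (flat_hull Lines A) F.
Proof. intros HF HA z Hz; apply Hz; auto. Qed.

Lemma hull_ext A B : set_eq A B -> set_eq (flat_hull Lines A) (flat_hull Lines B).
Proof.
  intros H z; split; intros Hz F HF HS; apply Hz; auto; intros w Hw; apply HS, H; auto.
Qed.

Lemma rank_sub S S' m : subset S' S -> rank_le Lines S m -> rank_le Lines S' m.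
Proof. intros H [B [HB HS]]; exists B; split; auto; intros z Hz; auto. Qed.

Lemma single_flat u : flat Lines (fun z => z = u).
Proof. intros x y -> -> z [->|[H _]]; auto; congruence. Qed.

Lemma line_flat u v : flat Lines (line_through Lines u v).
Proof.
  destruct (classic (u = v)) as [<-|Huv].
  - eapply (fun H => H); intros x y Hx Hy z Hz.
    assert (Hs : forall w, line_through Lines u u w -> w = u)
      by (intros w [->|[H _]]; auto; congruence).
    left. apply Hs in Hx; apply Hs in Hy; subst.
    destruct Hz as [->|[H _]]; auto; congruence.
  - destruct HX as [H1 [H2 H3]].
    destruct (H1 u v Huv) as [L0 [HL [Lu Lv]]].
    intros x y Hx Hy z Hz.
    apply (line_eq u v L0) in Hx; auto. apply (line_eq u v L0) in Hy; auto.
    apply (line_eq u v L0); auto.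
    destruct Hz as [->|[Hxy [L [HL' [Lx [Ly Lz]]]]]]; auto.
    apply (H2 x y L L0); auto.
Qed.

Lemma rank2 S x0 : rank_le Lines S 2 -> S x0 ->
  exists u v, subset S (line_through Lines u v).
Proof.
  intros [B [HB HS]] Hx0.
  destruct B as [|u [|v [|w B]]]; simpl in HB; try lia.
  - exfalso. apply (HS x0 Hx0 (fun _ => False)); [intros ? ? []|intros z []].
  - exists u, u. intros z Hz. left.
    apply (HS z Hz (fun z => z = u)); [apply single_flat|].
    intros w [->|[]]; auto.
  - exists u, v. intros z Hz.
    apply (HS z Hz); [apply line_flat|].
    intros w [->|[->|[]]]; [left; auto|].
    destruct (classic (u = w)) as [<-|Huw]; [left; auto|].
    destruct HX as [H1 _]. destruct (H1 u w Huw) as [L0 [? [? ?]]].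
    apply (line_eq u w L0); auto.
Qed.

Definition tri (x p q : T) : T -> Prop := fun z => z = x \/ z = p \/ z = q.

Lemma noncol L x p q : Lines L -> L p -> L q -> p <> q -> ~ L x ->
  ~ rank_le Lines (tri x p q) 2.
Proof.
  intros HL Lp Lq Hpq Lx Hr.
  destruct (rank2 _ x Hr) as [u [v Hs]]; [left; auto|].
  destruct (classic (u = v)) as [<-|Huv].
  - assert (Hsg : forall w, line_through Lines u u w -> w = u)
      by (intros w [->|[H _]]; auto; congruence).
    apply Hpq. rewrite (Hsg p), (Hsg q); auto; apply Hs; unfold tri; auto.
  - destruct HX as [H1 [H2 H3]]. destruct (H1 u v Huv) as [L0 [HL0 [Lu Lv]]].
    assert (Hin : forall w, tri x p q w -> L0 w)
      by (intros w Hw; apply (line_eq u v L0); auto).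
    apply Lx. apply (H2 p q L0 L); auto; apply Hin; unfold tri; auto.
Qed.

Lemma col_neq x p q : ~ rank_le Lines (tri x p q) 2 -> p <> q.
Proof.
  intros H ->. apply H. exists [x; q]; split; simpl; auto.
  intros z [->|[->| ->]]; apply hull_incl; simpl; auto.
Qed.

Lemma col_notin x p q L : ~ rank_le Lines (tri x p q) 2 -> Lines L -> L p -> L q -> ~ L x.
Proof.
  intros H HL Lp Lq Lx. pose proof (col_neq _ _ _ H) as Hpq. apply H.
  exists [p; q]; split; simpl; auto.
  assert (Hl : subset L (flat_hull Lines (fun z => In z [p; q]))).
  { intros z Lz. apply (hull_flat _ p q); try (apply hull_incl; simpl; auto).
    apply (line_eq p q L); auto. }
  intros z [->|[->| ->]]; auto.
Qed.

Lemma plane_hull S x p q : S x -> S p -> S q -> ~ rank_le Lines (tri x p q) 2 ->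
  subset S (flat_hull Lines (fun z => In z [x; p; q])) ->
  plane Lines (flat_hull Lines S).
Proof.
  intros Sx Sp Sq Hn Hs. split; [apply hull_flat|split].
  - exists [x; p; q]; split; auto. apply hull_min; auto; apply hull_flat.
  - intros m Hm [B [HB HS]]. apply Hn. exists B; split; [lia|].
    intros z Hz; apply HS, hull_incl. destruct Hz as [->|[->| ->]]; auto.
Qed.

Lemma php n : forall m (R : nat -> nat -> Prop),
  (forall i, i < n -> exists j, j < m /\ R i j) ->
  (forall i i' j, i < n -> i' < n -> j < m -> R i j -> R i' j -> i = i') -> n <= m.
Proof.
  induction n as [|n IH]; intros m R Hex Hinj; [lia|].
  destruct (Hex n ltac:(lia)) as [j0 [Hj0 Rj0]].
  assert (n <= m - 1); [|lia].
  apply (IH (m - 1) (fun i j => R i (if j <? j0 then j else S j))).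
  - intros i Hi. destruct (Hex i ltac:(lia)) as [j [Hj Rj]].
    destruct (Nat.lt_trichotomy j j0) as [Hlt|[Heq|Hgt]].
    + exists j. split; [lia|]. replace (j <? j0) with true; auto.
      symmetry; apply Nat.ltb_lt; auto.
    + subst. pose proof (Hinj i n j0 ltac:(lia) ltac:(lia) Hj Rj Rj0); lia.
    + exists (j - 1). split; [lia|].
      replace (j - 1 <? j0) with false; [replace (S (j - 1)) with j by lia; auto|].
      symmetry; apply Nat.ltb_ge; lia.
  - intros i i' j Hi Hi' Hj R1 R2. 
    apply (Hinj i i' (if j <? j0 then j else S j)); auto; try lia.
    destruct (j <? j0); lia.
Qed.

Lemma extra (Q : (T -> Prop) -> Prop) k (Hex : exactly_n Q k) (l' : list (T -> Prop))
  (Hlen : length l' = k)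
  (Hd : forall i j, i < k -> j < k -> i <> j ->
        ~ set_eq (nth i l' (fun _ => False)) (nth j l' (fun _ => False)))
  (Hin : forall A, In A l' -> Q A) (A0 : T -> Prop) (QA0 : Q A0)
  (Hnot : forall B, In B l' -> ~ set_eq A0 B) : False.
Proof.
  destruct Hex as [l [Hl [Hld [HlQ HlB]]]].
  set (item i := nth i (l' ++ [A0]) (fun _ => False)).
  assert (Hit1 : forall i, i < k -> item i = nth i l' (fun _ => False))
    by (intros; unfold item; apply app_nth1; lia).
  assert (Hit2 : item k = A0)
    by (unfold item; rewrite app_nth2 by lia; rewrite Hlen, Nat.sub_diag; reflexivity).
  assert (Hsym : forall A B : T -> Prop, set_eq A B -> set_eq B A)
    by (intros A B H z; split; apply H).
  assert (Htr : forall A B C : T -> Prop, set_eq A B -> set_eq B C -> set_eq A C)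
    by (intros A B C H H' z; split; intros; [apply H', H|apply H, H']; auto).
  assert (S k <= k); [|lia].
  apply (php (S k) k (fun i j => set_eq (item i) (nth j l (fun _ => False)))).
  - intros i Hi. assert (HQ : Q (item i)).
    { destruct (Nat.eq_dec i k) as [->|Hik]; [rewrite Hit2; auto|].
      rewrite Hit1 by lia. apply Hin, nth_In; lia. }
    destruct (HlB _ HQ) as [B [HB HBe]].
    destruct (In_nth l B (fun _ => False) HB) as [j [Hj Hnj]].
    exists j; split; [lia|]. rewrite Hnj; auto.
  - intros i i' j Hi Hi' Hj R1 R2.
    assert (E : set_eq (item i) (item i')) by (eapply Htr; [apply R1|apply Hsym, R2]).
    destruct (Nat.eq_dec i k) as [->|Hik]; destruct (Nat.eq_dec i' k) as [->|Hik']; auto.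
    + exfalso. rewrite Hit2, Hit1 in E by lia.
      apply (Hnot (nth i' l' (fun _ => False))); [apply nth_In; lia|exact E].
    + exfalso. rewrite Hit2, Hit1 in E by lia.
      apply (Hnot (nth i l' (fun _ => False))); [apply nth_In; lia|apply Hsym, E].
    + rewrite !Hit1 in E by lia. destruct (Nat.eq_dec i i'); auto.
      exfalso; apply (Hd i i'); auto; lia.
Qed.

Lemma key k (Hpar : kappa_parallel Lines k) P L N x :
  plane Lines P -> Lines L -> Lines N -> subset L P -> subset N P ->
  (forall z, L z -> ~ N z) -> N x ->
  subset N (flat_hull Lines (fun z => z = x \/ L z)).
Proof.
  intros HP HL HN LP NP Hdis Nx.
  destruct HX as [H1 [H2 H3]].
  destruct (H3 L HL) as [p [q [Hpq [Lp Lq]]]].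
  assert (Lx : ~ L x) by (intro Lx; apply (Hdis x); auto).
  pose proof (noncol L x p q HL Lp Lq Hpq Lx) as Hn.
  set (F := flat_hull Lines (fun z => z = x \/ L z)).
  assert (HF : plane Lines F).
  { apply (plane_hull _ x p q); auto.
    intros z [->|Lz]; [apply hull_incl; simpl; auto|].
    apply (hull_flat _ p q); try (apply hull_incl; simpl; auto).
    apply (line_eq p q L); auto. }
  assert (FP : subset F P).
  { apply hull_min; [apply HP|]. intros z [->|Lz]; auto. }
  assert (LF : subset L F) by (intros z Lz; apply hull_incl; auto).
  assert (Fx : F x) by (apply hull_incl; auto).
  destruct (Hpar F L x HF HL LF Fx Lx) as [lF [HlF [HdF [HinF _]]]].
  pose proof (Hpar P L x HP HL LP (FP x Fx) Lx) as HexP.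
  intros z Nz. apply NNPP. intro nF.
  refine (extra _ k HexP lF HlF HdF _ N _ _).
  - intros A HA. destruct (HinF A HA) as [? [? HAs]]. split; auto. split; auto.
    intros w Hw. destruct (HAs w Hw); auto.
  - split; auto. split; auto. intros w Hw; split; auto. intro Lw; apply (Hdis w); auto.
  - intros B HB HE. destruct (HinF B HB) as [_ [_ HBs]].
    apply nF. apply (HBs z); apply HE; auto.
Qed.

End S.

Theorem proposition6p7p7 (T : Type) (Lines : (T -> Prop) -> Prop)
  (HX : is_liner Lines) (k : nat) (Hk : 0 < k)
  (Hpar : kappa_parallel Lines k) (a b c : T)
  (Habc : triangle Lines a b c) :
  exists d : T, parallelogram Lines a b c d.
Proof.
  pose proof HX as [H1 [H2 H3]].
  assert (Hn : ~ rank_le Lines (tri a b c) 2) by (apply (proj2 Habc); lia).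
  assert (Hab : a <> b).
  { intro E; subst b. apply Hn. exists [a; c]; split; simpl; auto.
    intros z [->|[->| ->]]; apply hull_incl; simpl; auto. }
  assert (Hbc : b <> c) by (apply (col_neq Lines a); auto).
  destruct (H1 a b Hab) as [Lab [HLab [Laba Labb]]].
  destruct (H1 b c Hbc) as [Lbc [HLbc [Lbcb Lbcc]]].
  assert (cLab : ~ Lab c).
  { apply (col_notin Lines HX c a b); auto. intro Hr; apply Hn.
    refine (rank_sub Lines _ _ _ _ Hr). intros z Hz; unfold tri in *; tauto. }
  assert (aLbc : ~ Lbc a) by (apply (col_notin Lines HX a b c); auto).
  set (P := flat_hull Lines (tri a b c)).
  assert (HP : plane Lines P).
  { apply (plane_hull Lines _ a b c); unfold tri; auto.
    intros z [->|[->| ->]]; apply hull_incl; simpl; auto. }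
  assert (Pa : P a) by (apply hull_incl; unfold tri; auto).
  assert (Pb : P b) by (apply hull_incl; unfold tri; auto).
  assert (Pc : P c) by (apply hull_incl; unfold tri; auto).
  assert (LabP : subset Lab P).
  { intros z Hz. apply (hull_flat Lines _ a b); auto. apply (line_eq Lines HX a b Lab); auto. }
  assert (LbcP : subset Lbc P).
  { intros z Hz. apply (hull_flat Lines _ b c); auto. apply (line_eq Lines HX b c Lbc); auto. }
  destruct (Hpar P Lbc a HP HLbc LbcP Pa aLbc) as [lA [HlA [HdA [HinA _]]]].
  destruct (Hpar P Lab c HP HLab LabP Pc cLab) as [lC [HlC [_ [HinC _]]]].
  destruct (HinC (nth 0 lC (fun _ => False))) as [HM [Mc MP]]; [apply nth_In; lia|].
  set (M := nth 0 lC (fun _ => False)) in *.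
  assert (aM : ~ M a) by (intro Ma; destruct (MP a Ma); auto).
  assert (MP' : subset M P) by (intros z Hz; apply (MP z Hz)).
  pose proof (Hpar P M a HP HM MP' Pa aM) as HexM.
  assert (Hd : exists Lam d, In Lam lA /\ Lam d /\ M d).
  { apply NNPP; intro Hno.
    refine (extra _ k HexM lA HlA HdA _ Lab _ _).
    - intros A HA. destruct (HinA A HA) as [? [? HAs]]. split; auto. split; auto.
      intros w Hw. split; [apply (HAs w Hw)|]. intro Mw; apply Hno; eauto.
    - split; auto. split; auto. intros w Hw; split; auto.
      intro Mw; destruct (MP w Mw); auto.
    - intros B HB HE. destruct (HinA B HB) as [_ [_ HBs]].
      destruct (HBs b); auto. apply HE; auto. }
  destruct Hd as [Lam [d [HLam [Lamd Md]]]].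
  destruct (HinA Lam HLam) as [HLL [Lama LamP]].
  assert (Hcd : c <> d) by (intros ->; destruct (LamP d Lamd); auto).
  assert (Had : a <> d) by (intros ->; auto).
  assert (LamP' : subset Lam P) by (intros z Hz; apply (LamP z Hz)).
  pose proof (line_eq Lines HX a b Lab Hab HLab Laba Labb) as Eab.
  pose proof (line_eq Lines HX b c Lbc Hbc HLbc Lbcb Lbcc) as Ebc.
  pose proof (line_eq Lines HX c d M Hcd HM Mc Md) as Ecd.
  pose proof (line_eq Lines HX a d Lam Had HLL Lama Lamd) as Ead.
  assert (Hsub : forall (A A' B B' : T -> Prop), (forall z, A z <-> A' z) ->
     (forall z, B z <-> B' z) -> subparallel Lines A' B' -> subparallel Lines A B).
  { intros A A' B B' EA EB HS x Ax z Az.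
    apply (hull_ext Lines (fun w => w = x \/ B' w)); [intro w; rewrite EB; tauto|].
    apply HS; apply EA; auto. }
  assert (DisM : forall z, Lab z -> ~ M z) by (intros z Hz Mz; destruct (MP z Mz); auto).
  assert (DisL : forall z, Lbc z -> ~ Lam z) by (intros z Hz Lz; destruct (LamP z Lz); auto).
  exists d. split; [|split; [|split]].
  - split.
    + apply (Hsub _ Lab _ M); auto. intros x Hx.
      apply (key Lines HX k Hpar P M Lab x); auto.
      intros z Mz Lz; apply (DisM z); auto.
    + apply (Hsub _ M _ Lab); auto. intros x Hx.
      apply (key Lines HX k Hpar P Lab M x); auto.
  - intro E. apply cLab. apply Eab, (E c), Ecd; auto.
  - split.
    + apply (Hsub _ Lbc _ Lam); auto. intros x Hx.
      apply (key Lines HX k Hpar P Lam Lbc x); auto.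
      intros z Mz Lz; apply (DisL z); auto.
    + apply (Hsub _ Lam _ Lbc); auto. intros x Hx.
      apply (key Lines HX k Hpar P Lbc Lam x); auto.
  - intro E. apply aLbc. apply Ebc, (E a), Ead; auto.
Qed.
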